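(* Let $A$ be a finite abelian group, let $H$ be a subgroup of $A$, let $A_2$ be the Sylow $2$-subgroup of $A$ and $H_2$ the Sylow $2$-subgroup of $H$, and suppose $|H_2|\neq 2$. Then $\Gamma_{A_2,H_2}$ admits a perfect code if and only if $\Gamma_{A,H}$ admits a perfect code.
   Context: Abelian groups are written additively with identity $0$. For a subgroup $H$ of a finite abelian group $A$, the subgroup sum graph $\Gamma_{A,H}$ is the simple undirected graph with vertex set $A$ in which distinct vertices $x,y$ are adjacent if and only if $x+y\in H\setminus\{0\}$. A perfect code in a graph is a set $C$ of vertices that is independent and such that every vertex not in $C$ is adjacent to exactly one vertex of $C$. *)

(* Defs.v *)
From mathcomp Require Import all_boot all_fingroup all_solvable.
Set Implicit Arguments. Unset Strict Implicit. Unset Printing Implicit Defensive.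

(* Finite abelian groups are represented (multiplicatively) as abelian
   subgroups of a finGroupType; the identity 0 corresponds to 1%g and
   x + y corresponds to x * y. *)

Local Open Scope group_scope.

Section SubgroupSumGraph.
Variable gT : finGroupType.

Definition ssg_adj (H : {set gT}) (x y : gT) : bool :=
  (x != y) && (x * y \in H :\ 1).

Definition is_perfect_code (A H C : {set gT}) : Prop :=
  [/\ C \subset A,
      (forall x y, x \in C -> y \in C -> ~~ ssg_adj H x y) &
      (forall x, x \in A :\: C -> #|[set c in C | ssg_adj H x c]| = 1%N)].

Definition has_perfect_code (A H : {set gT}) : Prop :=
  exists C : {set gT}, is_perfect_code A H C.

End SubgroupSumGraph.

(* Main.v *)
Require Import Defs.
From mathcomp Require Import all_boot all_fingroup all_solvable.
Local Open Scope group_scope.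

Definition Pcond {gT : finGroupType} (A H : {set gT}) : Prop :=
  forall a, a \in A -> a * a \in H -> exists2 h, h \in H & a * a = h * h.

Lemma sqM (gT : finGroupType) (x y : gT) : commute x y -> x * y * (x * y) = x * x * (y * y).
Proof. by move=> cxy; rewrite -mulgA (mulgA y) -cxy !mulgA. Qed.

Section Charac.
Variables (gT : finGroupType) (A H : {group gT}).
Hypotheses (abA : abelian A) (sHA : H \subset A).

Lemma comA {x y : gT} : x \in A -> y \in A -> x * y = y * x.
Proof. by move=> xA yA; move/centsP: abA => /(_ x xA y yA). Qed.

Lemma inA_of_coset {y z : gT} : y \in A -> z \in H :* y -> z \in A.
Proof.
move=> yA; rewrite mem_rcoset => zy; rewrite -(mulgKV y z).
by rewrite groupM // (subsetP sHA).
Qed.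

Lemma memK {x y : gT} : x \in A -> y \in A -> (y \in H :* x^-1) = (x * y \in H).
Proof. by move=> xA yA; rewrite mem_rcoset invgK comA. Qed.

Definition sel (K K' : {set gT}) : gT :=
  if K == K' then odflt 1 [pick z in K | z * z == 1]
  else if (enum_rank (repr K) < enum_rank (repr K'))%N then repr K
  else (repr K')^-1.

Definition f y := sel (H :* y) (H :* y^-1).

Lemma f_inv y : f y^-1 = (f y)^-1.
Proof.
rewrite /f invgK /sel eq_sym; case: eqP => [->|ne].
  case: pickP => [z /andP[_ zz]|_]; last by rewrite invg1.
  by apply/eqP; rewrite /= eq_sym eq_invg_mul.
have nr : repr (H :* y^-1) != repr (H :* y).
  apply/eqP => e; apply: ne.
  have := mem_repr_rcoset H y^-1; rewrite e => /rcoset_eqP <-.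
  by symmetry; apply/rcoset_eqP; apply: mem_repr_rcoset.
case: ltngtP => [lt|gt|eq]; rewrite ?invgK //.
by case/eqP: nr; apply: enum_rank_inj; apply: val_inj.
Qed.

Lemma f_coset {y z : gT} : y \in A -> z \in H :* y -> f z = f y.
Proof.
move=> yA zy; rewrite /f.
have zA := inA_of_coset yA zy.
have e1 : H :* z = H :* y by apply/rcoset_eqP.
have e2 : H :* z^-1 = H :* y^-1.
  apply/rcoset_eqP; rewrite mem_rcoset invgK.
  move: zy; rewrite mem_rcoset => zy.
  by rewrite comA ?groupV // -[y in y * z^-1]invgK -invMg groupV.
by rewrite e1 e2.
Qed.


Lemma pc_P : #|H| <> 2 -> has_perfect_code A H -> Pcond A H.
Proof.
move=> nH2 [C [sCA indep perf]] a aA aaH.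
have pairH x y : x \in A -> y \in A -> a * x \in H -> a * y \in H -> x * y \in H.
  move=> xA yA axH ayH.
  have e : a * x * (a * y) = x * y * (a * a).
    by rewrite (comA aA xA) -mulgA (mulgA a) (comA (groupM aA aA) yA) !mulgA.
  by rewrite -(mulgK (a * a) (x * y)) -e; apply: groupM; [apply: groupM | rewrite groupV].
have [c cC acH] : exists2 c, c \in C & a * c \in H.
  case: (boolP (a \in C)) => aC; first by exists a.
  have := perf a; rewrite inE aC aA => /(_ isT) /eqP /cards1P [c0 Ec].
  have : c0 \in [set c in C | ssg_adj H a c] by rewrite Ec set11.
  rewrite !inE => /andP[cC /andP[_]]; rewrite !inE => /andP[_ ?].
  by exists c0.
have cA := subsetP sCA c cC.
case: (eqVneq (c * c) 1) => cc1.
  exists (a * c) => //.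
  by rewrite sqM ?cc1 ?mulg1 // /commute comA.
have ccH : c * c \in H by apply: pairH.
have aciH : a * c^-1 \in H.
  have -> : a * c^-1 = a * c * (c * c)^-1 by rewrite invMg !mulgA mulgK.
  by rewrite groupM ?groupV.
have ciA : c^-1 \in A by rewrite groupV.
have cne : c != c^-1 by rewrite eq_sym eq_invg_mul.
have ciC : c^-1 \in C.
  case: (boolP (c^-1 \in C)) => // ciC; exfalso.
  have := perf c^-1; rewrite inE ciC ciA => /(_ isT) /eqP /cards1P [c0 Ec].
  have : c0 \in [set w in C | ssg_adj H c^-1 w] by rewrite Ec set11.
  rewrite !inE => /andP[c0C /andP[ne]]; rewrite !inE => /andP[n1 iH].
  have := indep c c0 cC c0C; rewrite /ssg_adj !inE; move/negP; apply.
  apply/and3P; split.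
  - by apply: contraNneq n1 => <-; rewrite mulVg.
  - by rewrite -eq_invg_mul.
  - have -> : c * c0 = c * c * (c^-1 * c0) by rewrite mulgA mulgK.
    by rewrite groupM.
set K := H :* a^-1.
have cK : c \in K by rewrite /K memK.
have ciK : c^-1 \in K by rewrite /K memK.
have : ~~ (K \subset [set c; c^-1]).
  apply/negP => sub; apply: nH2.
  have eK : K = [set c; c^-1].
    apply/eqP; rewrite eqEsubset sub; apply/subsetP => w.
    by rewrite !inE => /orP[]/eqP->.
  by rewrite -(card_rcoset H a^-1) -/K eK cards2 cne.
case/subsetPn => z zK; rewrite !inE => /norP[zc zci].
have zA : z \in A by apply: inA_of_coset zK; rewrite groupV.
have azH : a * z \in H by rewrite -memK .
have zC : z \notin C.
  apply/negP => zC; have := indep z c zC cC; rewrite /ssg_adj !inE zc /=.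
  by rewrite -[c in z * c]invgK -eq_mulgV1 zci invgK (pairH z c).
have := perf z; rewrite inE zC zA => /(_ isT) => e.
have : #|[set c; c^-1]| <= #|[set w in C | ssg_adj H z w]|.
  apply: subset_leq_card; apply/subsetP => w; rewrite !inE.
  case/orP => /eqP ->; rewrite /ssg_adj !inE ?ciC ?cC /=.
  - by rewrite zc -[c in z * c]invgK -eq_mulgV1 zci invgK (pairH z c).
  - by rewrite zci -eq_mulgV1 zc (pairH z c^-1).
by rewrite e cards2 cne.
Qed.


Hypothesis PAH : Pcond A H.

Lemma f_mem {y : gT} : y \in A -> f y \in H :* y.
Proof.
move=> yA; rewrite /f /sel; case: eqP => [eqK|ne].
  case: pickP => [z /andP[]//|none]; exfalso.
  have : y^-1 \in H :* y by rewrite eqK rcoset_refl.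
  rewrite mem_rcoset => yyH.
  have yyH' : y * y \in H by rewrite -[y * y]invgK invMg groupV.
  have [h hH e] := PAH y yA yyH'.
  have hA := subsetP sHA h hH.
  have := none (h^-1 * y); rewrite mem_rcoset mulgK groupV hH /=.
  rewrite sqM; last by rewrite /commute comA ?groupV.
  by rewrite e -invMg mulVg eqxx.
case: ifP => _; first exact: mem_repr_rcoset.
have rm := mem_repr_rcoset H y^-1.
have rA : repr (H :* y^-1) \in A by apply: inA_of_coset rm; rewrite groupV.
rewrite mem_rcoset -invMg groupV -(memK yA rA) //.
Qed.

Lemma fA {y : gT} : y \in A -> f y \in A.
Proof. by move=> yA; apply: inA_of_coset yA (f_mem yA). Qed.

Lemma f_idem {y : gT} : y \in A -> f (f y) = f y.
Proof. by move=> yA; apply: f_coset yA (f_mem yA). Qed.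

Lemma P_pc : has_perfect_code A H.
Proof.
exists (f @: A); split.
- by apply/subsetP => _ /imsetP[y yA ->]; apply: fA.
- move=> _ _ /imsetP[y1 y1A ->] /imsetP[y2 y2A ->]; rewrite /ssg_adj.
  apply/negP => /andP[ne]; rewrite !inE => /andP[n1 inH].
  have c1A := fA y1A; have c2A := fA y2A.
  have : f y2 \in H :* (f y1)^-1 by rewrite memK.
  move/(f_coset (groupVr c1A)); rewrite f_idem // f_inv f_idem // => e.
  by rewrite e mulgV eqxx in n1.
- move=> x; rewrite inE => /andP[xC xA].
  suff -> : [set c in f @: A | ssg_adj H x c] = [set f x^-1] by rewrite cards1.
  apply/setP => c; rewrite !inE; apply/andP/eqP.
    case=> /imsetP[y yA ->] /andP[_]; rewrite !inE => /andP[_ xfy].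
    have : f y \in H :* x^-1 by rewrite memK // fA.
    by move/(f_coset (groupVr xA)); rewrite f_idem.
  move=> ->; split; first by apply/imsetP; exists x^-1; rewrite ?groupV.
  rewrite /ssg_adj !inE; apply/and3P; split.
  - apply: contraNneq xC => ->; apply/imsetP; exists x^-1; rewrite ?groupV //.
  - rewrite f_inv -eq_mulgV1; apply: contraNneq xC => ->.
    by apply/imsetP; exists x.
  - by rewrite -memK ?fA ?groupV // f_mem ?groupV.
Qed.

End Charac.

Lemma consttG (gT : finGroupType) (G : {group gT}) pi x : x \in G -> x.`_pi \in G.
Proof. by rewrite -cycle_subG => /subsetP; apply; apply: cycle_constt. Qed.

Lemma comm_ab (gT : finGroupType) (G : {group gT}) x y :
  abelian G -> x \in G -> y \in G -> commute x y.
Proof. by move=> abG xG yG; move/centsP: abG => /(_ x xG y yG). Qed.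

Lemma P_Syl (gT : finGroupType) (A H A2 H2 : {group gT}) :
  abelian A -> H \subset A ->
  A2 \in 'Syl_2(A) -> H2 \in 'Syl_2(H) ->
  Pcond A H <-> Pcond A2 H2.
Proof.
move=> abA sHA; rewrite !inE => hA2 hH2.
have abH : abelian H := abelianS sHA abA.
have nA2 : A2 <| A by rewrite -sub_abelian_normal // (pHall_sub hA2).
have nH2 : H2 <| H by rewrite -sub_abelian_normal // (pHall_sub hH2).
have memA2 x : x \in A -> (x \in A2) = 2.-elt x := mem_normal_Hall hA2 nA2.
have memH2 x : x \in H -> (x \in H2) = 2.-elt x := mem_normal_Hall hH2 nH2.
have sA2 := subsetP (pHall_sub hA2); have sH2 := subsetP (pHall_sub hH2).
split=> PP.
  move=> a aA2 aaH2.
  have aA := sA2 a aA2; have aaH := sH2 _ aaH2.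
  have [h hH e] := PP a aA aaH.
  exists h.`_2; first by rewrite memH2 ?consttG // p_elt_constt.
  rewrite -consttM; last exact: commute_refl.
  rewrite -e constt_p_elt //.
  exact: mem_p_elt (pHall_pgroup hA2) (groupM aA2 aA2).
move=> a aA aaH.
have caa : commute a a := commute_refl a.
have e2 : (a * a).`_2 = a.`_2 * a.`_2 by rewrite consttM.
have eo : (a * a).`_2^' = a.`_2^' * a.`_2^' by rewrite consttM.
have a2A2 : a.`_2 \in A2 by rewrite memA2 ?consttG // p_elt_constt.
have a2H2 : a.`_2 * a.`_2 \in H2 by rewrite -e2 memH2 ?consttG // p_elt_constt.
have [h2 h2H2 e2'] := PP _ a2A2 a2H2.
set ao := a.`_2^'.
have aoH : ao * ao \in H by rewrite -eo consttG.
have oddm : odd #[ao].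
  have := p_elt_constt 2^' a; rewrite -/ao /p_elt p'natE // dvdn2.
  by rewrite negbK.
set ho := (ao * ao) ^+ (#[ao].+1)./2.
have hoH : ho \in H by rewrite groupX.
have hoho : ho * ho = ao * ao.
  rewrite /ho -expgD addnn.
  have := odd_double_half #[ao].+1; rewrite /= oddm /= add0n => ->.
  have -> : ao * ao = ao ^+ 2 by rewrite expgS expg1.
  by rewrite expgAC (expgSr ao) expg_order mul1g.
have h2H := sH2 _ h2H2.
have aoA : ao \in A by rewrite consttG.
have a2A : a.`_2 \in A by rewrite consttG.
exists (h2 * ho); first by rewrite groupM.
have h2A := subsetP sHA _ h2H; have hoA := subsetP sHA _ hoH.
rewrite sqM; last exact: comm_ab abA h2A hoA.
rewrite -e2' hoho -sqM; last exact: comm_ab abA a2A aoA.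
by rewrite consttC.
Qed.

Theorem corollary3p6 (gT : finGroupType) (A H A2 H2 : {group gT}) :
  abelian A -> H \subset A ->
  A2 \in 'Syl_2(A) -> H2 \in 'Syl_2(H) -> #|H2| <> 2 ->
  has_perfect_code A2 H2 <-> has_perfect_code A H.
Proof.
move=> abA sHA sylA sylH nH2.
have hA2 : 2.-Sylow(A) A2 by move: sylA; rewrite inE.
have hH2 : 2.-Sylow(H) H2 by move: sylH; rewrite inE.
have nH : #|H| <> 2.
  by move=> cH; apply: nH2; rewrite (card_Hall hH2) cH part_pnat_id // pnat_id.
have abA2 : abelian A2 := abelianS (pHall_sub hA2) abA.
have nA2 : A2 <| A by rewrite -sub_abelian_normal // (pHall_sub hA2).
have sH2A2 : H2 \subset A2.
  apply/subsetP => x xH2.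
  have xA : x \in A by rewrite (subsetP sHA) // (subsetP (pHall_sub hH2)).
  rewrite (mem_normal_Hall hA2 nA2 xA).
  exact: mem_p_elt (pHall_pgroup hH2) xH2.
have PS := @P_Syl gT A H A2 H2 abA sHA sylA sylH.
split => pc.
  by apply: P_pc => //; apply/PS; apply: pc_P.
by apply: P_pc => //; apply/PS; apply: pc_P.
Qed.
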